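(* Let $d\ge2$ and let $\mathbf{x}=(x_0,\dots,x_{d-1})\in\mathbb{R}^d$ with $x_i\ge 0$ for all $i$ and $\mathbf{x}\neq 0$. Define the operator on $\mathbb{C}^d\otimes\mathbb{C}^d$ $$I_{\mathbf{x}}=\frac{1}{\|\mathbf{x}\|_1^2}\left(\sum_{i=0}^{d-1}x_i^2\ket{ii}\bra{ii}+\sum_{0\le i<j<d}2x_ix_j\ket{D_{ij}}\bra{D_{ij}}\right),$$ where $\ket{D_{ij}}=(\ket{ij}+\ket{ji})/\sqrt2$ and $\|\mathbf{x}\|_1=\sum_i x_i$. Then $I_{\mathbf{x}}$ is a separable quantum state.
   Context: $\{\ket{0},\dots,\ket{d-1}\}$ denotes the computational basis of $\mathbb{C}^d$. A state is separable if it is a convex combination (possibly given by an integral over a probability measure) of product states $\rho^A\otimes\rho^B$. *)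

(* Defs.v *)
From HB Require Import structures.
From mathcomp Require Import all_boot all_order all_algebra.
From mathcomp Require Import reals.
From mathcomp Require Import complex mxtens.
Set Implicit Arguments. Unset Strict Implicit. Unset Printing Implicit Defensive.
Import Order.TTheory GRing.Theory Num.Theory.
Local Open Scope ring_scope.

Definition adjmx (C : numClosedFieldType) m n (A : 'M[C]_(m, n)) : 'M[C]_(n, m) :=
  (map_mx Num.conj A)^T.

Definition psd (C : numClosedFieldType) n (A : 'M[C]_n) : Prop :=
  adjmx A = A /\ forall v : 'cV[C]_n, 0 <= (adjmx v *m A *m v) 0 0.

Definition density (C : numClosedFieldType) n (A : 'M[C]_n) : Prop :=
  psd A /\ \tr A = 1.

Definition separable (C : numClosedFieldType) m n (rho : 'M[C]_(m * n)) : Prop :=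
  density rho /\
  exists (k : nat) (p : 'I_k -> C) (rA : 'I_k -> 'M[C]_m) (rB : 'I_k -> 'M[C]_n),
    [/\ forall l, 0 <= p l, \sum_l p l = 1,
        forall l, density (rA l) /\ density (rB l)
      & rho = \sum_l p l *: (rA l *t rB l)].

Definition ket (C : numClosedFieldType) d (i : 'I_d) : 'cV[C]_d := delta_mx i 0.
Definition ket2 (C : numClosedFieldType) d (i j : 'I_d) : 'cV[C]_(d * d) :=
  castmx (erefl, muln1 1) (ket C i *t ket C j).

Definition Dket (C : numClosedFieldType) d (i j : 'I_d) : 'cV[C]_(d * d) :=
  (sqrtC 2)^-1 *: (ket2 C i j + ket2 C j i).

Definition ketbra (C : numClosedFieldType) n (v : 'cV[C]_n) : 'M[C]_n := v *m adjmx v.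

Definition norm1 (R : realType) d (x : 'I_d -> R) : R := \sum_i x i.

Definition Iop (R : realType) d (x : 'I_d -> R) : 'M[R[i]]_(d * d) :=
  ((norm1 x) ^+ 2)^-1%:C%C *:
    (\sum_(i < d) ((x i) ^+ 2)%:C%C *: ketbra (ket2 _ i i)
     + \sum_(i < d) \sum_(j < d | (i < j)%N) (2 * x i * x j)%:C%C *: ketbra (Dket _ i j)).

(* Main.v *)
Require Import Defs.
From HB Require Import structures.
From mathcomp Require Import all_boot all_order all_algebra.
From mathcomp Require Import reals.
From mathcomp Require Import complex mxtens.
From mathcomp Require Import zify ring.
Set Implicit Arguments. Unset Strict Implicit. Unset Printing Implicit Defensive.
Import Order.TTheory GRing.Theory Num.Theory.
Local Open Scope ring_scope.

Section Gen.
Variable C : numClosedFieldType.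

Definition w (n : 'I_4) : C := 'i ^+ n.

Lemma i4 : 'i ^+ 4 = 1 :> C.
Proof. by rewrite (_ : 4 = 2 * 2)%N // exprM sqrCi sqrrN expr1n. Qed.

Lemma iexp_mod n : 'i ^+ (n %% 4) = 'i ^+ n :> C.
Proof. by rewrite {2}(divn_eq n 4) exprD mulnC exprM i4 expr1n mul1r. Qed.

Lemma wJw n : w n * (w n)^* = 1.
Proof. by rewrite /w rmorphXn /= conjCi -exprMn mulrN mulCii opprK expr1n. Qed.

Lemma wS (n : 'I_4) : w (n + 1) = w n * 'i.
Proof. by rewrite /w /= iexp_mod (_ : (1 %% 4 = 1)%N) // addn1 exprSr. Qed.

Lemma neq_pick d (a b c e : 'I_d) :
  ~~ ((a == c) && (b == e) || (a == e) && (b == c)) ->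
  exists k, ((a == k) + (b == k) != (c == k) + (e == k))%N.
Proof.
case: (eqVneq a c) => [<-|ac]; case: (eqVneq b e) => [<-|be] //= H.
- by exists b; rewrite eqxx [e == b]eq_sym (negbTE be); case: (a == b).
- by exists a; rewrite eqxx [c == a]eq_sym (negbTE ac); case: (b == a).
- case: (eqVneq a e) => [ae|ae].
  + case: (eqVneq b c) => [bc|bc]; first by rewrite ae bc !eqxx in H.
    by exists b; rewrite eqxx [c == b]eq_sym (negbTE bc) ae; case: (e == b).
  + by exists a; rewrite eqxx [c == a]eq_sym (negbTE ac) [e == a]eq_sym (negbTE ae).
Qed.
Lemma i_neq1 : 'i != 1 :> C.
Proof. by apply/eqP => h; move: (@nonRealCi C); rewrite h real1. Qed.
Lemma Ni_neq1 : - 'i != 1 :> C.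
Proof. apply/eqP => h; move: (@nonRealCi C); rewrite -[X in X \in _]opprK h realN real1 //. Qed.
Lemma N1_neq1 : -1 != 1 :> C.
Proof. by rewrite lt_eqF // (lt_trans (ltrN10 _)) ?ltr01. Qed.

Definition chi d (t : {ffun 'I_d -> 'I_4}) a b c e :=
  w (t a) * w (t b) * (w (t c))^* * (w (t e))^*.

Lemma charsum d (a b c e : 'I_d) :
  \sum_(t : {ffun 'I_d -> 'I_4}) chi t a b c e =
  ((a == c) && (b == e) || (a == e) && (b == c))%:R * #|{ffun 'I_d -> 'I_4}|%:R.
Proof.
have [/orP H|H] := boolP (_ || _); rewrite ?mul1r ?mul0r.
  rewrite -sumr_const; apply: eq_bigr => t _; rewrite /chi.
  case: H => /andP [/eqP <- /eqP <-].
    by rewrite mulrAC -(mulrA _ (w _)) wJw mulr1 wJw.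
  by rewrite -(mulrA _ (w _)) wJw mulr1 wJw.
have [k Hk] := neq_pick H.
pose f m := if m == k then 'i else 1 : C.
pose z := f a * f b * (f c)^* * (f e)^*.
have z1 : z != 1.
  rewrite /z /f; move: Hk.
  case: (a == k); case: (b == k); case: (c == k); case: (e == k) => //= _;
  rewrite ?rmorph1 ?conjCi ?mulr1 ?mul1r ?mulrN ?mulNr ?mulCii ?opprK ?mulN1r ?mulrN1 ?opprK;
  first [exact: i_neq1 | exact: Ni_neq1 | exact: N1_neq1].
pose sh (t : {ffun 'I_d -> 'I_4}) := [ffun m => if m == k then t m + 1 else t m].
have sh_inj : injective sh.
  move=> t1 t2 /ffunP h; apply/ffunP => m; have := h m; rewrite !ffunE.
  by case: ifP => // _; apply: addIr.
have wf t m : w (sh t m) = w (t m) * f m.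
  by rewrite ffunE /f; case: ifP => _; rewrite ?wS ?mulr1.
set S := \sum_t _.
have hS : S = S * z.
  rewrite {1}/S (reindex_inj sh_inj) /S mulr_suml; apply: eq_bigr => t _.
  rewrite /chi !wf !rmorphM /= /z; ring.
move/eqP: hS; rewrite -subr_eq0 -{1}(mulr1 S) -mulrBr mulf_eq0 subr_eq0 [1 == _]eq_sym (negbTE z1) orbF.
by move/eqP.
Qed.
Lemma ketbraE n (v : 'cV[C]_n) r s : ketbra v r s = v r 0 * (v s 0)^*.
Proof. by rewrite /ketbra mxE big_ord1 !mxE. Qed.

Lemma skE n (c : C) (v : 'cV[C]_n) r s : (c *: ketbra v) r s = c * (v r 0 * (v s 0)^*).
Proof. by rewrite [LHS]mxE ketbraE. Qed.

Definition dl2 d (a b i j : 'I_d) : C := ((a == i) && (b == j))%:R.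

Lemma ket2E d (i j a b : 'I_d) :
  ket2 C i j (mxtens_index (a, b)) 0 = dl2 a b i j.
Proof.
rewrite /ket2 castmxE /=.
have -> : cast_ord (esym (muln1 1)) 0 = mxtens_index (0 : 'I_1, 0 : 'I_1) by apply: val_inj.
rewrite (_ : cast_ord _ _ = mxtens_index (a, b)); last by apply: val_inj.
by rewrite tensmxE /ket !mxE /dl2 eqxx !andbT -natrM mulnb.
Qed.
Lemma dl2J d (a b i j : 'I_d) : (dl2 a b i j)^* = dl2 a b i j.
Proof. exact: rmorph_nat. Qed.

Definition Gop d (y : 'I_d -> C) : 'M[C]_(d * d) :=
  ((\sum_i y i) ^+ 2)^-1 *:
    (\sum_(i < d) (y i ^+ 2) *: ketbra (ket2 C i i)
     + \sum_(i < d) \sum_(j < d | (i < j)%N) (2 * y i * y j) *: ketbra (Dket C i j)).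

Lemma hJ : ((sqrtC (2 : C))^-1)^* = (sqrtC 2)^-1.
Proof. by apply: geC0_conj; rewrite invr_ge0 sqrtC_ge0 ler0n. Qed.

Lemma hh : (sqrtC (2 : C))^-1 * (sqrtC 2)^-1 = 2^-1.
Proof. by rewrite -invrM ?unitfE ?sqrtC_eq0 ?pnatr_eq0 // -expr2 sqrtCK. Qed.

Lemma GopE1 d (y : 'I_d -> C) a b c e :
  Gop y (mxtens_index (a, b)) (mxtens_index (c, e)) =
  ((\sum_i y i) ^+ 2)^-1 *
   (\sum_i y i ^+ 2 * (dl2 a b i i * dl2 c e i i)
    + \sum_(i < d) \sum_(j < d | (i < j)%N)
         (dl2 a b i j + dl2 a b j i) * (y i * y j * (dl2 c e i j + dl2 c e j i))).
Proof.
rewrite /Gop !mxE !summxE; congr (_ * (_ + _)).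
  by apply: eq_bigr => i _; rewrite skE !ket2E dl2J.
apply: eq_bigr => i _; rewrite summxE; apply: eq_bigr => j _.
rewrite skE /Dket !mxE !ket2E rmorphM rmorphD /= hJ !dl2J.
rewrite (_ : forall X Y : C, 2 * y i * y j * ((sqrtC 2)^-1 * X * ((sqrtC 2)^-1 * Y))
   = 2 * ((sqrtC 2)^-1 * (sqrtC 2)^-1) * (X * (y i * y j * Y))); last by move=> X Y; ring.
by rewrite hh mulfV ?pnatr_eq0 // mul1r.
Qed.
Lemma pair_pick d (K : 'I_d -> 'I_d -> C) (a b : 'I_d) : (a < b)%N ->
  \sum_(i < d) \sum_(j < d | (i < j)%N) (dl2 a b i j + dl2 a b j i) * K i j = K a b.
Proof.
move=> ab; have ba : (b != a) by rewrite neq_ltn ab orbT.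
rewrite (bigD1 a) //= (bigD1 b) //= [X in _ + X = _]big1; last first.
  move=> i ia; apply: big1 => j ij; rewrite /dl2 [a == i]eq_sym (negbTE ia) /=.
  case: (eqVneq a j) => [aj|]; last by rewrite /= addr0 mul0r.
  case: (eqVneq b i) => [bi|]; last by rewrite andbF addr0 mul0r.
  by move: ij; rewrite -aj -bi ltnNge ltnW.
rewrite [X in _ + X + _ = _]big1; last first.
  move=> j /andP [_ jb]; rewrite /dl2 eqxx [b == j]eq_sym (negbTE jb) /=.
  by rewrite (negbTE ba) andbF addr0 mul0r.
by rewrite /dl2 !eqxx /= (negbTE ba) andbF /= !addr0 mul1r.
Qed.

Lemma pair_zero d (K : 'I_d -> 'I_d -> C) (a : 'I_d) :
  \sum_(i < d) \sum_(j < d | (i < j)%N) (dl2 a a i j + dl2 a a j i) * K i j = 0.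
Proof.
apply: big1 => i _; apply: big1 => j ij; rewrite /dl2.
case: (eqVneq a i) => [ai|]; case: (eqVneq a j) => [aj|] //=; rewrite ?addr0 ?mul0r //.
by move: ij; rewrite -ai -aj ltnn.
Qed.

Definition mtch d (a b c e : 'I_d) := (a == c) && (b == e) || (a == e) && (b == c).

Lemma dl2_mtch d (a b c e : 'I_d) : a != b -> dl2 c e a b + dl2 c e b a = (mtch a b c e)%:R.
Proof.
move=> hab; rewrite /dl2 /mtch [a == c]eq_sym [b == e]eq_sym [a == e]eq_sym [b == c]eq_sym.
case: (eqVneq c a) => [->|ca]; case: (eqVneq e b) => [->|eb] //=;
  rewrite ?eqxx ?(negbTE hab) ?[b == a]eq_sym ?(negbTE hab) ?andbF ?addr0 ?add0r //=.
all: by rewrite andbC.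
Qed.

Lemma GopE d (y : 'I_d -> C) a b c e :
  Gop y (mxtens_index (a, b)) (mxtens_index (c, e)) =
  ((\sum_i y i) ^+ 2)^-1 * (y a * y b * (mtch a b c e)%:R).
Proof.
rewrite GopE1; congr (_ * _).
rewrite (bigD1 a) //= big1 ?addr0; last first.
  by move=> i ia; rewrite /dl2 [a == i]eq_sym (negbTE ia) mul0r mulr0.
case: (ltngtP a b) => [ab|ba|ab].
- have hab : a != b by rewrite neq_ltn ab.
  rewrite pair_pick // dl2_mtch // {1}/dl2 eqxx [b == a]eq_sym (negbTE hab) /=.
  by rewrite mul0r mulr0 add0r.
- have hab : a != b by rewrite neq_ltn ba orbT.
  rewrite (eq_bigr (fun i : 'I_d => \sum_(j < d | (i < j)%N) (dl2 b a i j + dl2 b a j i) *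
     (y i * y j * (dl2 c e i j + dl2 c e j i)))); last first.
    by move=> i _; apply: eq_bigr => j _; rewrite /dl2 [(b == i) && _]andbC [(b == j) && _]andbC addrC.
  rewrite pair_pick // [dl2 c e b a + _]addrC dl2_mtch // {1}/dl2 eqxx [b == a]eq_sym (negbTE hab) /=.
  by rewrite mul0r mulr0 add0r [y b * _]mulrC.
- have hab : a = b by apply: val_inj.
  subst b; rewrite pair_zero addr0 /dl2 /mtch eqxx /= mul1r expr2.
  by rewrite [(a == e) && _]andbC orbb [c == a]eq_sym [e == a]eq_sym.
Qed.
Lemma adjmxK m n (A : 'M[C]_(m, n)) : adjmx (adjmx A) = A.
Proof. by apply/matrixP => i j; rewrite !mxE conjCK. Qed.

Lemma adjmx_mul m n p (A : 'M[C]_(m, n)) (B : 'M[C]_(n, p)) :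
  adjmx (A *m B) = adjmx B *m adjmx A.
Proof. by rewrite /adjmx map_mxM trmx_mul. Qed.

Lemma adjmxD m n (A B : 'M[C]_(m, n)) : adjmx (A + B) = adjmx A + adjmx B.
Proof. by apply/matrixP => i j; rewrite !mxE rmorphD. Qed.

Lemma adjmxZ m n c (A : 'M[C]_(m, n)) : adjmx (c *: A) = c^* *: adjmx A.
Proof. by apply/matrixP => i j; rewrite !mxE rmorphM. Qed.

Lemma adjmx_tens m n p q (A : 'M[C]_(m, n)) (B : 'M[C]_(p, q)) :
  adjmx (A *t B) = adjmx A *t adjmx B.
Proof. by rewrite /adjmx map_mxT trmx_tens. Qed.

Lemma psd_ket n m (W : 'M[C]_(n, m)) : psd (W *m adjmx W).
Proof.
split; first by rewrite adjmx_mul adjmxK.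
move=> v.
have -> : adjmx v *m (W *m adjmx W) *m v = adjmx (adjmx W *m v) *m (adjmx W *m v).
  by rewrite adjmx_mul adjmxK !mulmxA.
rewrite mxE.
apply: sumr_ge0 => k _; rewrite !mxE mulrC; exact: mul_conjC_ge0.
Qed.

Lemma psd0 n : psd (0 : 'M[C]_n).
Proof.
split; first by apply/matrixP => i j; rewrite !mxE rmorph0.
by move=> v; rewrite mulmx0 mul0mx mxE.
Qed.

Lemma psdD n (A B : 'M[C]_n) : psd A -> psd B -> psd (A + B).
Proof.
move=> [hA qA] [hB qB]; split; first by rewrite adjmxD hA hB.
by move=> v; rewrite mulmxDr mulmxDl mxE addr_ge0.
Qed.

Lemma psdZ n c (A : 'M[C]_n) : 0 <= c -> psd A -> psd (c *: A).
Proof.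
move=> c0 [hA qA]; split; first by rewrite adjmxZ hA geC0_conj.
by move=> v; rewrite -scalemxAr -scalemxAl mxE mulr_ge0.
Qed.

Lemma psd_sum n (I : finType) (F : I -> 'M[C]_n) : (forall i, psd (F i)) -> psd (\sum_i F i).
Proof.
move=> h; apply: (big_ind (fun A => psd A)) => //; [exact: psd0 | exact: psdD].
Qed.

Lemma tr_tens m n (A : 'M[C]_m) (B : 'M[C]_n) : \tr (A *t B) = \tr A * \tr B.
Proof.
rewrite /mxtrace mulr_sum; apply: eq_bigr => i _.
by rewrite mxE.
Qed.
Lemma gen_sep d (y : 'I_d -> C) : (forall i, 0 <= y i) -> \sum_i y i != 0 ->
  separable (Gop y).
Proof.
move=> y0 N0; set N := \sum_i y i in N0.
have N_ge0 : 0 <= N by apply: sumr_ge0.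
pose sq k := sqrtC (y k / N).
have sq_ge0 k : 0 <= sq k by rewrite sqrtC_ge0 divr_ge0.
have sq2 k : sq k ^+ 2 = y k / N by rewrite sqrtCK.
pose T := {ffun 'I_d -> 'I_4}.
pose u (t : T) : 'cV[C]_d := \col_k (sq k * w (t k)).
pose A t := ketbra (u t).
pose p : C := (#|T|%:R)^-1.
have cardT : (#|T|%:R : C) != 0 by rewrite pnatr_eq0 -lt0n card_ffun card_ord expn_gt0.
have p_ge0 : 0 <= p by rewrite invr_ge0 ler0n.
have hA t : density (A t).
  split; first exact: psd_ket.
  rewrite /mxtrace (eq_bigr (fun k => y k / N)); first by rewrite -mulr_suml mulfV.
  move=> k _; rewrite ketbraE !mxE rmorphM /= [(sq k)^*]geC0_conj //.
  by rewrite mulrACA wJw mulr1 -expr2 sq2.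
have psdT t : psd (A t *t A t).
  by rewrite /A /ketbra -tensmx_mul -adjmx_tens; exact: psd_ket.
have hrho : Gop y = \sum_t p *: (A t *t A t).
  apply/matrixP => r s.
  case: (mxtens_indexP r) => a b; case: (mxtens_indexP s) => c e.
  rewrite GopE summxE.
  rewrite (eq_bigr (fun t => p * (sq a * sq b * sq c * sq e) * chi t a b c e)); last first.
    move=> t _; rewrite mxE tensmxE !ketbraE !mxE !rmorphM /= [(sq c)^*]geC0_conj // [(sq e)^*]geC0_conj // /chi.
    ring.
  rewrite -mulr_sumr charsum -/(mtch a b c e).
  case: (boolP (mtch a b c e)) => H; last by rewrite !mul0r !mulr0.
  rewrite mul1r mulr1 mulrAC /p mulVf // mul1r.
  have -> : sq a * sq b * sq c * sq e = sq a ^+ 2 * sq b ^+ 2.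
    by case/orP: H => /andP [/eqP <- /eqP <-]; rewrite !expr2; ring.
  rewrite !sq2 /N; field; exact: N0.
split.
  split.
    by rewrite hrho; apply: psd_sum => t; apply: psdZ.
  rewrite hrho linear_sum /= (eq_bigr (fun _ => p)); last first.
    by move=> t _; rewrite mxtraceZ tr_tens; case: (hA t) => _ ->; rewrite !mulr1.
  by rewrite sumr_const -mulr_natr mulVf.
exists #|T|, (fun _ => p), (fun l => A (enum_val l)), (fun l => A (enum_val l)).
split.
- by [].
- by rewrite sumr_const card_ord -mulr_natr mulVf.
- by move=> l; split.
- by rewrite hrho (big_enum_val (fun t => p *: (A t *t A t))).
Qed.
End Gen.

Lemma Iop_Gop (R : realType) d (x : 'I_d -> R) :
  Iop x = Gop (fun i => (x i)%:C%C).
Proof.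
rewrite /Iop /Gop /norm1 fmorphV rmorphXn rmorph_sum; congr (_ *: (_ + _)).
  by apply: eq_bigr => i _; rewrite rmorphXn.
apply: eq_bigr => i _; apply: eq_bigr => j _.
by rewrite !rmorphM rmorph_nat.
Qed.

Unset Implicit Arguments.

Theorem lemma2 (R : realType) (d : nat) (hd : (2 <= d)%N) (x : 'I_d -> R)
  (hx0 : forall i, 0 <= x i) (hx : exists i, x i != 0) :
  separable (Iop x).
Proof.
rewrite Iop_Gop; apply: gen_sep => [i|]; first by rewrite ler0c.
rewrite -rmorph_sum fmorph_eq0; case: hx => i xi.
apply/negP => /eqP h.
have hi : x i = 0 by apply: (psumr_eq0P (fun j _ => hx0 j) h).
by rewrite hi eqxx in xi.
Qed.
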